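(* Let $\xi_m>0$, $0\le\mu\le\xi_m$, and for $\Delta\ge0$, $T>0$ define $$f(\mu,\Delta,T)=2T\ln\frac{\cosh(\sqrt{\xi_m^2+\Delta^2}/2T)}{\cosh(\sqrt{\mu^2+\Delta^2}/2T)}+\mu\int_0^{\mu}\tanh\Big(\frac{\sqrt{\xi^2+\Delta^2}}{2T}\Big)\frac{d\xi}{\sqrt{\xi^2+\Delta^2}}$$ (with the integrand at $\Delta=0$ read as $\tanh(\xi/2T)/\xi$). Then for $\Delta>0$, $T>0$ and $\mu\in(0,\xi_m)$: $\partial f/\partial\mu>0$, $\partial f/\partial\Delta<0$, $\partial f/\partial T<0$. Moreover $\lim_{T\to\infty}f(\mu,\Delta,T)=0$ and $\lim_{\Delta\to\infty}f(\mu,\Delta,T)=0$ for fixed $T>0$. *)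

(* Defs.v *)
From Stdlib Require Import Reals Lra ClassicalEpsilon.
Open Scope R_scope.

(* Riemann integral of g over [a,b] (0 if g is not Riemann integrable;
   the integrands used below are continuous, hence integrable). *)
Definition Rint (g : R -> R) (a b : R) : R :=
  match excluded_middle_informative (inhabited (Riemann_integrable g a b)) with
  | left h => RiemannInt (epsilon h (fun _ => True))
  | right _ => 0
  end.

(* integrand tanh(sqrt(xi^2+D^2)/(2T)) / sqrt(xi^2+D^2), extended at
   xi = D = 0 by its limit 1/(2T) (the paper's reading tanh(xi/2T)/xi at D=0) *)
Definition integrand (D T xi : R) : R :=
  let E := sqrt (xi ^ 2 + D ^ 2) in
  if Req_EM_T E 0 then / (2 * T) else tanh (E / (2 * T)) / E.

Definition fgap (xim mu D T : R) : R :=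
  2 * T * ln (cosh (sqrt (xim ^ 2 + D ^ 2) / (2 * T))
              / cosh (sqrt (mu ^ 2 + D ^ 2) / (2 * T)))
  + mu * Rint (integrand D T) 0 mu.

(* Main.v *)
Require Import Defs.
From Stdlib Require Import Reals Lra ClassicalEpsilon FunctionalExtensionality.
From Coquelicot Require Import Coquelicot.
Open Scope R_scope.

Lemma cosh_pos x : 0 < cosh x.
Proof. unfold cosh. pose proof (exp_pos x). pose proof (exp_pos (-x)). lra. Qed.

Lemma cosh_ge1 x : 1 <= cosh x.
Proof.
  unfold cosh. rewrite exp_Ropp. pose proof (exp_pos x). set (u := exp x) in *.
  assert (u * (u + / u - 2) = (u-1)^2) by (field; lra).
  assert (0 <= u + /u - 2).
  { destruct (Rle_or_lt 0 (u + /u - 2)); auto. pose proof (pow2_ge_0 (u-1)). nra. }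
  lra.
Qed.

Lemma cosh_gt1 x : x <> 0 -> 1 < cosh x.
Proof.
  intro Hx. unfold cosh. rewrite exp_Ropp. pose proof (exp_pos x).
  assert (exp x <> 1). { intro E. apply Hx. apply exp_inv. rewrite exp_0; auto. }
  set (u := exp x) in *.
  assert (u * (u + / u - 2) = (u-1)^2) by (field; lra).
  assert (0 < (u-1)^2). { destruct (Rlt_or_le u 1); [nra|]. assert (1 < u) by lra. nra. }
  assert (0 < u + /u - 2).
  { destruct (Rle_or_lt (u + /u - 2) 0); auto. nra. }
  lra.
Qed.

Lemma sinh_lt_cosh x : sinh x < cosh x.
Proof. unfold sinh, cosh. pose proof (exp_pos (-x)). lra. Qed.

Lemma cosh2_sinh2 x : cosh x ^ 2 - sinh x ^ 2 = 1.
Proof. unfold cosh, sinh. rewrite exp_Ropp. pose proof (exp_pos x). field. lra. Qed.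

Lemma d_tanh x : derivable_pt_lim tanh x (/ cosh x ^ 2).
Proof.
  pose proof (cosh_pos x).
  apply is_derive_Reals. unfold tanh, sinh, cosh. auto_derive.
  - pose proof (exp_pos x). pose proof (exp_pos (-x)). lra.
  - rewrite !exp_Ropp. pose proof (exp_pos x). pose proof (Rinv_0_lt_compat _ H0).
    field. split; nra.
Qed.

Lemma sinh_0 : sinh 0 = 0.
Proof. unfold sinh. rewrite Ropp_0. lra. Qed.
Lemma tanh_0 : tanh 0 = 0.
Proof. unfold tanh. rewrite sinh_0. lra. Qed.

Lemma sinh_ge x : 0 <= x -> x <= sinh x.
Proof.
  intros Hx. destruct (Req_dec x 0) as [->|Hx0]. rewrite sinh_0; lra.
  destruct (MVT_cor2 sinh cosh 0 x) as [c [Hc1 Hc2]]. lra.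
  intros; apply derivable_pt_lim_sinh.
  rewrite sinh_0 in Hc1. pose proof (cosh_ge1 c). nra.
Qed.

Lemma tanh_cosh x : tanh x * cosh x = sinh x.
Proof. unfold tanh. pose proof (cosh_pos x). field. lra. Qed.

Lemma tanh_nonneg x : 0 <= x -> 0 <= tanh x.
Proof. intro. pose proof (sinh_ge x H). pose proof (tanh_cosh x). pose proof (cosh_pos x). nra. Qed.

Lemma tanh_lt1 x : tanh x < 1.
Proof. pose proof (sinh_lt_cosh x). pose proof (tanh_cosh x). pose proof (cosh_pos x). nra. Qed.

Lemma tanh_le x : 0 <= x -> tanh x <= x.
Proof.
  intros Hx. destruct (Req_dec x 0) as [->|Hx0]. rewrite tanh_0; lra.
  destruct (MVT_cor2 tanh (fun c => / cosh c ^ 2) 0 x) as [c [Hc1 Hc2]]. lra.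
  intros; apply d_tanh.
  rewrite tanh_0 in Hc1. pose proof (cosh_ge1 c).
  assert (/ cosh c ^ 2 <= 1). { rewrite <- Rinv_1. apply Rinv_le_contravar. lra. nra. }
  nra.
Qed.

Lemma K1 y : 0 < y -> y / cosh y ^ 2 < tanh y.
Proof.
  intros Hy. pose proof (sinh_ge y (Rlt_le _ _ Hy)). pose proof (cosh_gt1 y ltac:(lra)).
  assert (tanh y - y / cosh y ^ 2 = (sinh y * cosh y - y) / cosh y ^ 2).
  { unfold tanh. field. lra. }
  assert (0 < (sinh y * cosh y - y) / cosh y ^ 2).
  { apply Rdiv_lt_0_compat. nra. nra. }
  lra.
Qed.

Definition lc x := ln (cosh x).
Definition phi x := lc x - x * tanh x.
Definition tt T E := tanh (E / (2*T)) / E.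
Definition tp T E := (E/(2*T) / cosh (E/(2*T))^2 - tanh (E/(2*T))) / E^2.

Lemma d_lc x : derivable_pt_lim lc x (tanh x).
Proof.
  apply is_derive_Reals. unfold lc, tanh, sinh, cosh. auto_derive.
  - pose proof (exp_pos x). pose proof (exp_pos (-x)). lra.
  - rewrite !exp_Ropp. pose proof (exp_pos x). pose proof (Rinv_0_lt_compat _ H).
    field. split; nra.
Qed.

Lemma d_phi x : derivable_pt_lim phi x (- x / cosh x ^ 2).
Proof.
  apply is_derive_Reals. unfold phi, lc, tanh, sinh, cosh. auto_derive.
  - pose proof (exp_pos x). pose proof (exp_pos (-x)). repeat split; lra.
  - rewrite !exp_Ropp. pose proof (exp_pos x). pose proof (Rinv_0_lt_compat _ H).
    field. split; nra.
Qed.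

Lemma d_tt T E : 0 < T -> 0 < E -> derivable_pt_lim (tt T) E (tp T E).
Proof.
  intros HT HE.
  apply is_derive_Reals. unfold tt, tp, tanh, sinh, cosh. auto_derive.
  - pose proof (exp_pos (E * / (2*T))). pose proof (exp_pos (-(E * / (2*T)))). repeat split; lra.
  - rewrite !exp_Ropp. pose proof (exp_pos (E * / (2*T))). pose proof (Rinv_0_lt_compat _ H).
    unfold Rdiv. set (u := exp (E * / (2*T))) in *.
    field. repeat split; nra.
Qed.


Lemma tp_neg T E : 0 < T -> 0 < E -> tp T E < 0.
Proof.
  intros HT HE. unfold tp. pose proof (K1 (E/(2*T)) ltac:(apply Rdiv_lt_0_compat; lra)).
  assert (0 < E^2) by nra.
  assert (Hn : E / (2 * T) / cosh (E / (2 * T)) ^ 2 - tanh (E / (2 * T)) < 0) by lra.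
  apply Rdiv_neg_pos; auto.
Qed.

Lemma tt_dec T E1 E2 : 0 < T -> 0 < E1 < E2 -> tt T E2 < tt T E1.
Proof.
  intros HT HE.
  destruct (MVT_cor2 (tt T) (tp T) E1 E2) as [c [Hc1 Hc2]]. lra.
  intros c Hc; apply d_tt; lra.
  pose proof (tp_neg T c HT ltac:(lra)). nra.
Qed.

Lemma phi_dec a b : 0 < b < a -> phi a < phi b.
Proof.
  intros H.
  destruct (MVT_cor2 phi (fun x => - x / cosh x ^ 2) b a) as [c [Hc1 Hc2]]. lra.
  intros c Hc; apply d_phi.
  assert (0 < c / cosh c ^ 2) by (apply Rdiv_lt_0_compat; [lra| pose proof (cosh_pos c); nra]).
  assert (- c / cosh c ^ 2 = - (c / cosh c ^ 2)) by (unfold Rdiv; ring).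
  nra.
Qed.

Lemma lc_diff a b : 0 <= b <= a -> 0 <= lc a - lc b <= a * (a - b) /\ lc a - lc b <= a - b.
Proof.
  intros H. destruct (Req_dec a b) as [->|Hab]. replace (b - b) with 0 by ring. lra.
  destruct (MVT_cor2 lc tanh b a) as [c [Hc1 Hc2]]. lra.
  intros c Hc; apply d_lc.
  pose proof (tanh_nonneg c ltac:(lra)). pose proof (tanh_le c ltac:(lra)). pose proof (tanh_lt1 c).
  rewrite Hc1. split; [split|]; nra.
Qed.

Lemma Rint_RInt g a b : ex_RInt g a b -> Rint g a b = RInt g a b.
Proof.
  intros H. unfold Rint. destruct excluded_middle_informative as [h|h].
  - symmetry. apply RInt_Reals.
  - exfalso. apply h. constructor. apply ex_RInt_Reals_0. exact H.
Qed.

Lemma Rint_bound g mu K : 0 <= mu -> (forall x, 0 <= x <= mu -> Rabs (g x) <= K) ->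
  Rabs (Rint g 0 mu) <= K * mu.
Proof.
  intros Hmu Hb. assert (0 <= K) by (pose proof (Hb 0 ltac:(lra)); pose proof (Rabs_pos (g 0)); lra).
  unfold Rint. destruct excluded_middle_informative as [h|h].
  - rewrite <- RInt_Reals. eapply Rle_trans. apply abs_RInt_le_const; eauto.
    apply ex_RInt_Reals_1. apply (epsilon h (fun _ => True)). lra.
  - rewrite Rabs_R0. nra.
Qed.

Lemma fgap_eq xim mu D T : fgap xim mu D T =
  2*T*(lc (sqrt (xim^2+D^2)/(2*T)) - lc (sqrt (mu^2+D^2)/(2*T))) + mu * Rint (integrand D T) 0 mu.
Proof. unfold fgap, lc. rewrite ln_div; auto using cosh_pos. Qed.

Lemma integrand_bound1 D T x : 0 < T -> Rabs (integrand D T x) <= / (2*T).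
Proof.
  intros HT. unfold integrand. destruct Req_EM_T as [e|e].
  - rewrite Rabs_right. lra. left. apply Rinv_0_lt_compat. lra.
  - set (E := sqrt (x^2+D^2)) in *. assert (0 < E) by (pose proof (sqrt_pos (x^2+D^2)); fold E in H; lra).
    assert (0 <= E/(2*T)) by (left; apply Rdiv_lt_0_compat; lra).
    pose proof (tanh_nonneg _ H0). pose proof (tanh_le _ H0).
    rewrite Rabs_right. 2: apply Rle_ge, Rdiv_le_0_compat; lra.
    replace (/ (2*T)) with ((E/(2*T))/E) by (field; lra).
    unfold Rdiv at 1 3. apply Rmult_le_compat_r. left; apply Rinv_0_lt_compat; lra. lra.
Qed.

Lemma integrand_bound2 D T x : 0 < T -> 0 < D -> Rabs (integrand D T x) <= / D.
Proof.
  intros HT HD. unfold integrand.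
  assert (HE : D <= sqrt (x^2+D^2)).
  { rewrite <- (sqrt_pow2 D) at 1 by lra. apply sqrt_le_1_alt. pose proof (pow2_ge_0 x). lra. }
  destruct Req_EM_T as [e|e]. lra.
  set (E := sqrt (x^2+D^2)) in *.
  assert (0 <= E/(2*T)) by (left; apply Rdiv_lt_0_compat; lra).
  pose proof (tanh_nonneg _ H). pose proof (tanh_lt1 (E/(2*T))).
  rewrite Rabs_right. 2: apply Rle_ge, Rdiv_le_0_compat; lra.
  apply Rle_trans with (/E). unfold Rdiv. rewrite <- (Rmult_1_l (/E)) at 2.
  apply Rmult_le_compat_r. left; apply Rinv_0_lt_compat; lra. lra.
  apply Rinv_le_contravar; lra.
Qed.

Lemma sqrt_sq_le a D : 0 <= D -> D <= sqrt (a^2 + D^2).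
Proof. intros. rewrite <- (sqrt_pow2 D) at 1 by lra. apply sqrt_le_1_alt. pose proof (pow2_ge_0 a). lra. Qed.

Lemma sqrt_mono mu xim D : 0 <= mu <= xim -> sqrt (mu^2+D^2) <= sqrt (xim^2+D^2).
Proof. intros. apply sqrt_le_1_alt. nra. Qed.

Lemma limT xim mu D : 0 < xim -> 0 <= mu <= xim -> 0 <= D ->
  forall eps, 0 < eps -> exists M, forall T, M < T -> Rabs (fgap xim mu D T) < eps.
Proof.
  intros hx Hmu HD eps Heps. exists ((2*xim^2+D^2)/eps).
  intros T HT. assert (HM : 0 <= (2*xim^2+D^2)/eps) by (apply Rdiv_le_0_compat; nra).
  assert (T0 : 0 < T) by lra.
  rewrite fgap_eq.
  pose proof (sqrt_mono mu xim D Hmu). pose proof (sqrt_pos (mu^2+D^2)).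
  assert (Eq : sqrt (xim^2+D^2) ^2 = xim^2+D^2) by (apply pow2_sqrt; nra).
  set (Em := sqrt (xim^2+D^2)) in *. set (Eu := sqrt (mu^2+D^2)) in *.
  set (a := Em/(2*T)). set (b := Eu/(2*T)).
  assert (Hab : 0 <= b <= a).
  { unfold a, b, Rdiv. split. apply Rmult_le_pos; [lra| left; apply Rinv_0_lt_compat; lra].
    apply Rmult_le_compat_r; [left; apply Rinv_0_lt_compat; lra | lra]. }
  destruct (lc_diff a b Hab) as [[H1 H2] _].
  pose proof (Rint_bound (integrand D T) mu (/(2*T)) ltac:(lra) (fun x _ => integrand_bound1 D T x T0)).
  set (I := Rint (integrand D T) 0 mu) in *.
  eapply Rle_lt_trans. apply Rabs_triang.
  rewrite Rabs_right by nra. rewrite Rabs_mult, (Rabs_right mu) by lra.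
  assert (2*T*(a*(a-b)) <= Em^2/(2*T)).
  { replace (Em^2/(2*T)) with (2*T*(a*a)) by (unfold a; field; lra).
    assert (0 <= a*b) by nra. nra. }
  assert (mu * Rabs I <= mu^2/(2*T)).
  { replace (mu^2/(2*T)) with (mu * (/(2*T)*mu)) by (field; lra). nra. }
  assert ((2*xim^2+D^2)/(2*T) < eps).
  { apply Rmult_lt_reg_r with (2*T). lra. unfold Rdiv. rewrite Rmult_assoc, Rinv_l by lra.
    assert ((2*xim^2+D^2) < eps * T).
    { apply Rmult_lt_reg_r with (/eps). apply Rinv_0_lt_compat; lra.
      replace (eps*T*/eps) with T by (field; lra). exact HT. }
    nra. }
  assert (Em^2/(2*T) + mu^2/(2*T) <= (2*xim^2+D^2)/(2*T)).
  { rewrite Eq. unfold Rdiv. rewrite <- Rmult_plus_distr_r. apply Rmult_le_compat_r.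
    left; apply Rinv_0_lt_compat; lra. nra. }
  nra.
Qed.

Lemma limD xim mu T : 0 < xim -> 0 <= mu <= xim -> 0 < T ->
  forall eps, 0 < eps -> exists M, forall D, M < D -> Rabs (fgap xim mu D T) < eps.
Proof.
  intros hx Hmu HT eps Heps. exists (2*xim^2/eps).
  intros D HDM. assert (HM : 0 < 2*xim^2/eps) by (apply Rdiv_lt_0_compat; nra).
  assert (D0 : 0 < D) by lra.
  rewrite fgap_eq.
  pose proof (sqrt_mono mu xim D Hmu). pose proof (sqrt_pos (mu^2+D^2)).
  pose proof (sqrt_sq_le xim D ltac:(lra)).
  assert (Eq : sqrt (xim^2+D^2) ^2 = xim^2+D^2) by (apply pow2_sqrt; nra).
  assert (Equ : sqrt (mu^2+D^2) ^2 = mu^2+D^2) by (apply pow2_sqrt; nra).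
  set (Em := sqrt (xim^2+D^2)) in *. set (Eu := sqrt (mu^2+D^2)) in *.
  set (a := Em/(2*T)). set (b := Eu/(2*T)).
  assert (Hab : 0 <= b <= a).
  { unfold a, b, Rdiv. split. apply Rmult_le_pos; [lra| left; apply Rinv_0_lt_compat; lra].
    apply Rmult_le_compat_r; [left; apply Rinv_0_lt_compat; lra | lra]. }
  destruct (lc_diff a b Hab) as [[Hl1 _] Hl2].
  pose proof (Rint_bound (integrand D T) mu (/D) ltac:(lra) (fun x _ => integrand_bound2 D T x HT D0)).
  set (I := Rint (integrand D T) 0 mu) in *.
  eapply Rle_lt_trans. apply Rabs_triang.
  rewrite Rabs_right by nra. rewrite Rabs_mult, (Rabs_right mu) by lra.
  assert (2*T*(a-b) = Em - Eu) by (unfold a, b; field; lra).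
  assert ((Em - Eu) * D <= xim^2) by nra.
  assert (Em - Eu <= xim^2/D).
  { apply Rmult_le_reg_r with D. lra. unfold Rdiv. rewrite Rmult_assoc, Rinv_l by lra. lra. }
  assert (mu * Rabs I <= xim^2/D).
  { apply Rle_trans with (mu * (/D*mu)). nra.
    replace (mu*(/D*mu)) with (mu^2 * /D) by ring. unfold Rdiv.
    pose proof (Rinv_0_lt_compat D D0). apply Rmult_le_compat_r; nra. }
  assert (2*xim^2/D < eps).
  { apply Rmult_lt_reg_r with D. lra. unfold Rdiv. rewrite Rmult_assoc, Rinv_l by lra.
    assert (2*xim^2 < eps * D).
    { apply Rmult_lt_reg_r with (/eps). apply Rinv_0_lt_compat; lra.
      replace (eps*D*/eps) with D by (field; lra). exact HDM. }
    nra. }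
  assert (xim^2/D + xim^2/D = 2*xim^2/D) by (field; lra).
  nra.
Qed.

Lemma Dplus f g x a b : derivable_pt_lim f x a -> derivable_pt_lim g x b ->
  derivable_pt_lim (fun y => f y + g y) x (a + b).
Proof. exact (derivable_pt_lim_plus f g x a b). Qed.
Lemma Dminus f g x a b : derivable_pt_lim f x a -> derivable_pt_lim g x b ->
  derivable_pt_lim (fun y => f y - g y) x (a - b).
Proof. exact (derivable_pt_lim_minus f g x a b). Qed.
Lemma Dmult f g x a b : derivable_pt_lim f x a -> derivable_pt_lim g x b ->
  derivable_pt_lim (fun y => f y * g y) x (a * g x + f x * b).
Proof. exact (derivable_pt_lim_mult f g x a b). Qed.
Lemma Dconst c x : derivable_pt_lim (fun _ => c) x 0.
Proof. exact (derivable_pt_lim_const c x). Qed.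
Lemma Did x : derivable_pt_lim (fun y => y) x 1.
Proof. exact (derivable_pt_lim_id x). Qed.
Lemma Deq f x a b : derivable_pt_lim f x a -> a = b -> derivable_pt_lim f x b.
Proof. intros H ->; exact H. Qed.
Lemma Dext f g x a : (forall y, f y = g y) -> derivable_pt_lim f x a -> derivable_pt_lim g x a.
Proof. intros E H. replace g with f; auto. apply functional_extensionality; auto. Qed.

Lemma d_lcs T c m : 0 < T -> 0 < m^2 + c ->
  derivable_pt_lim (fun m => lc (sqrt (m^2 + c)/(2*T))) m
    (tanh (sqrt (m^2+c)/(2*T)) * (m / sqrt (m^2+c) / (2*T))).
Proof.
  intros HT Hc.
  assert (Hg : derivable_pt_lim (fun m => sqrt (m^2 + c)/(2*T)) m (m / sqrt (m^2+c) / (2*T))).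
  { apply is_derive_Reals. auto_derive. simpl in Hc. repeat split; lra.
    replace (m*(m*1)+c) with (m^2+c) by ring. pose proof (sqrt_lt_R0 _ Hc). field. lra. }
  pose proof (derivable_pt_lim_comp _ lc m _ _ Hg (d_lc _)). unfold comp in H.
  exact H.
Qed.

Lemma d_lcs' T c m : 0 < T -> 0 < c + m^2 ->
  derivable_pt_lim (fun m => lc (sqrt (c + m^2)/(2*T))) m
    (tanh (sqrt (c+m^2)/(2*T)) * (m / sqrt (c+m^2) / (2*T))).
Proof.
  intros HT Hc.
  assert (Hg : derivable_pt_lim (fun m => sqrt (c + m^2)/(2*T)) m (m / sqrt (c+m^2) / (2*T))).
  { apply is_derive_Reals. auto_derive. simpl in Hc. repeat split; lra.
    replace (c+m*(m*1)) with (c+m^2) by ring. pose proof (sqrt_lt_R0 _ Hc). field. lra. }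
  pose proof (derivable_pt_lim_comp _ lc m _ _ Hg (d_lc _)). unfold comp in H.
  exact H.
Qed.

Definition k D T x := tt T (sqrt (x^2 + D^2)).

Lemma integrand_k D T x : 0 < D -> integrand D T x = k D T x.
Proof.
  intros HD. unfold integrand, k, tt. destruct Req_EM_T as [e|e]; auto.
  exfalso. assert (0 < sqrt (x^2+D^2)) by (apply sqrt_lt_R0; nra). lra.
Qed.

Lemma k_cont D T x : 0 < D -> 0 < T -> continuous (k D T) x.
Proof.
  intros HD HT. apply (@ex_derive_continuous R_AbsRing R_NormedModule). unfold k, tt, tanh, sinh, cosh. auto_derive.
  assert (0 < x*(x*1) + D*(D*1)) by nra.
  pose proof (sqrt_lt_R0 _ H).
  pose proof (exp_pos (sqrt (x * (x * 1) + D * (D * 1)) * / (2 * T))).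
  pose proof (exp_pos (- (sqrt (x * (x * 1) + D * (D * 1)) * / (2 * T)))).
  repeat split; lra.
Qed.

Lemma k_exRInt D T a b : 0 < D -> 0 < T -> ex_RInt (k D T) a b.
Proof. intros. apply (@ex_RInt_continuous R_CompleteNormedModule). intros; apply k_cont; auto. Qed.

Lemma k_pos D T x : 0 < D -> 0 < T -> 0 < k D T x.
Proof.
  intros. unfold k, tt. assert (0 < sqrt (x^2+D^2)) by (apply sqrt_lt_R0; nra).
  apply Rdiv_lt_0_compat; auto.
  assert (0 < sqrt (x^2+D^2)/(2*T)) by (apply Rdiv_lt_0_compat; lra).
  pose proof (sinh_ge _ (Rlt_le _ _ H2)). pose proof (tanh_cosh (sqrt (x^2+D^2)/(2*T))).
  pose proof (cosh_pos (sqrt (x^2+D^2)/(2*T))). nra.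
Qed.

Lemma part1 xim mu D T : 0 < D -> 0 < T -> 0 < mu < xim ->
  exists l, derivable_pt_lim (fun m => fgap xim m D T) mu l /\ 0 < l.
Proof.
  intros HD HT Hmu. exists (RInt (k D T) 0 mu). split.
  2: { apply RInt_gt_0. lra. intros; apply k_pos; auto. intros; apply k_cont; auto. }
  apply Dext with (fun m => 2*T*(lc (sqrt (xim^2+D^2)/(2*T)) - lc (sqrt (m^2+D^2)/(2*T))) + m * RInt (k D T) 0 m).
  { intros m. rewrite fgap_eq. f_equal. f_equal.
    replace (integrand D T) with (k D T) by (apply functional_extensionality; intros; rewrite integrand_k; auto).
    rewrite Rint_RInt; auto. apply k_exRInt; auto. }
  eapply Deq.
  { apply Dplus. apply Dmult. apply Dconst. apply Dminus. apply Dconst. apply d_lcs. auto. nra.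
    apply Dmult. apply Did.
    apply is_derive_Reals. apply (is_derive_RInt (k D T) (fun b => RInt (k D T) 0 b) 0 mu).
    apply filter_forall. intros. apply (@RInt_correct R_CompleteNormedModule). apply k_exRInt; auto.
    apply k_cont; auto. }
  unfold k, tt. assert (0 < sqrt (mu^2+D^2)) by (apply sqrt_lt_R0; nra).
  field. lra.
Qed.

Lemma loc_pos x : 0 < x -> locally x (fun y => 0 < y).
Proof. intros H. exists (mkposreal x H). intros y Hy. change (Rabs (y - x) < x) in Hy.
 apply Rabs_lt_between' in Hy. lra. Qed.

Lemma loc2_pos x y : 0 < x -> locally_2d (fun u v => 0 < u) x y.
Proof. intros H. exists (mkposreal x H). intros u v Hu _. simpl in Hu.
 apply Rabs_lt_between' in Hu. lra. Qed.

Lemma cpt_of (f : R -> R) (x : R) : @ex_derive R_AbsRing R_NormedModule f x -> continuity_pt f x.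
Proof. intros; apply continuity_pt_filterlim; apply (@ex_derive_continuous R_AbsRing R_NormedModule); auto. Qed.

Lemma cont_of (f : R -> R) (x : R) : @ex_derive R_AbsRing R_NormedModule f x -> @continuous R_UniformSpace R_UniformSpace f x.
Proof. intros; apply (@ex_derive_continuous R_AbsRing R_NormedModule); auto. Qed.

Lemma RInt_neg g a b : a < b -> (forall x, a < x < b -> g x < 0) ->
  (forall x, a <= x <= b -> continuous g x) -> RInt g a b < 0.
Proof.
  intros Hab Hn Hc.
  assert (0 < RInt (fun x => - g x) a b).
  { apply RInt_gt_0; auto. intros x Hx; specialize (Hn x Hx); lra.
    intros x Hx. apply (@continuous_opp _ R_AbsRing R_NormedModule g x). auto. }
  assert (RInt (fun x => - g x) a b = - RInt g a b).
  { apply (@RInt_opp R_CompleteNormedModule). apply (@ex_RInt_continuous R_CompleteNormedModule).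
    intros z Hz. apply Hc. rewrite Rmin_left, Rmax_right in Hz; lra. }
  lra.
Qed.

Lemma c2_sq_id1 x y : continuity_2d_pt (fun u v => u^2) x y.
Proof. apply (continuity_1d_2d_pt_comp (fun z => z^2) (fun u v => u)).
  apply cpt_of. auto_derive. auto. apply continuity_2d_pt_id1. Qed.
Lemma c2_sq_id2 x y : continuity_2d_pt (fun u v => v^2) x y.
Proof. apply (continuity_1d_2d_pt_comp (fun z => z^2) (fun u v => v)).
  apply cpt_of. auto_derive. auto. apply continuity_2d_pt_id2. Qed.

Definition kD D T x := tp T (sqrt (x^2+D^2)) * (D / sqrt (x^2+D^2)).

Lemma d_kD D T x : 0 < D -> 0 < T -> derivable_pt_lim (fun u => k u T x) D (kD D T x).
Proof.
  intros HD HT.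
  assert (Hc : 0 < x^2 + D^2) by nra.
  assert (Hg : derivable_pt_lim (fun u => sqrt (x^2 + u^2)) D (D / sqrt (x^2+D^2))).
  { apply is_derive_Reals. auto_derive. simpl in Hc. lra.
    replace (x*(x*1)+D*(D*1)) with (x^2+D^2) by ring. pose proof (sqrt_lt_R0 _ Hc). field. lra. }
  pose proof (derivable_pt_lim_comp _ (tt T) D _ _ Hg (d_tt T _ HT (sqrt_lt_R0 _ Hc))).
  unfold comp in H. exact H.
Qed.

Lemma tp_exd T E : 0 < T -> 0 < E -> ex_derive (tp T) E.
Proof.
  intros HT HE. unfold tp, tanh, sinh, cosh. auto_derive.
  pose proof (exp_pos (E * / (2*T))). pose proof (exp_pos (-(E * / (2*T)))).
  repeat split; try lra; try nra.
Qed.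

Lemma kD_cont2 D T t : 0 < D -> 0 < T -> continuity_2d_pt (fun u v => kD u T v) D t.
Proof.
  intros HD HT. unfold kD.
  assert (Hc : 0 < t^2 + D^2) by nra. pose proof (sqrt_lt_R0 _ Hc).
  assert (Hs : continuity_2d_pt (fun u v => sqrt (v^2+u^2)) D t).
  { apply (continuity_1d_2d_pt_comp sqrt (fun u v => v^2+u^2)).
    apply continuity_pt_sqrt. lra.
    apply (continuity_2d_pt_plus (fun u v => v^2) (fun u v => u^2)).
    apply c2_sq_id2. apply c2_sq_id1. }
  apply (continuity_2d_pt_mult (fun u v => tp T (sqrt (v^2+u^2))) (fun u v => u / sqrt (v^2+u^2))).
  - apply (continuity_1d_2d_pt_comp (tp T) (fun u v => sqrt (v^2+u^2))).
    apply cpt_of. apply tp_exd; auto. exact Hs.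
  - apply (continuity_2d_pt_mult (fun u v => u) (fun u v => / sqrt (v^2+u^2))).
    apply continuity_2d_pt_id1.
    apply (continuity_2d_pt_inv (fun u v => sqrt (v^2+u^2))). exact Hs. lra.
Qed.

Lemma kD_cont D T t : 0 < D -> 0 < T -> continuous (kD D T) t.
Proof.
  intros HD HT. apply cont_of. unfold kD, tp, tanh, sinh, cosh. auto_derive.
  assert (0 < t*(t*1) + D*(D*1)) by nra.
  pose proof (sqrt_lt_R0 _ H).
  set (s := sqrt (t * (t * 1) + D * (D * 1))) in *.
  pose proof (exp_pos (s * / (2 * T))).
  pose proof (exp_pos (- (s * / (2 * T)))).
  repeat split; try lra; nra.
Qed.

Lemma kD_neg D T t : 0 < D -> 0 < T -> kD D T t < 0.
Proof.
  intros HD HT. unfold kD. assert (0 < sqrt (t^2+D^2)) by (apply sqrt_lt_R0; nra).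
  pose proof (tp_neg T _ HT H). assert (0 < D / sqrt (t^2+D^2)) by (apply Rdiv_lt_0_compat; lra).
  nra.
Qed.

Lemma part2 xim mu D T : 0 < D -> 0 < T -> 0 < mu < xim ->
  exists l, derivable_pt_lim (fun d => fgap xim mu d T) D l /\ l < 0.
Proof.
  intros HD HT Hmu.
  set (Em := sqrt (xim^2 + D^2)). set (Eu := sqrt (mu^2 + D^2)).
  assert (HEu : 0 < Eu) by (apply sqrt_lt_R0; nra).
  assert (HEm : Eu < Em) by (apply sqrt_lt_1_alt; nra).
  exists (D * (tt T Em - tt T Eu) + mu * RInt (kD D T) 0 mu). split.
  2: { pose proof (tt_dec T Eu Em HT ltac:(lra)).
       assert (RInt (kD D T) 0 mu < 0).
       { apply RInt_neg. lra. intros; apply kD_neg; auto. intros; apply kD_cont; auto. }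
       nra. }
  apply is_derive_Reals.
  apply (is_derive_ext_loc (fun d => 2*T*(lc (sqrt (xim^2+d^2)/(2*T)) - lc (sqrt (mu^2+d^2)/(2*T)))
       + mu * RInt (fun t => k d T t) 0 mu)).
  { eapply filter_imp. 2: apply (loc_pos D HD). intros d Hd. simpl.
    rewrite fgap_eq. f_equal. f_equal.
    replace (integrand d T) with (k d T) by (apply functional_extensionality; intros; rewrite integrand_k; auto).
    rewrite Rint_RInt; auto. apply k_exRInt; auto. }
  assert (HP : is_derive (fun d => RInt (fun t => k d T t) 0 mu) D (RInt (kD D T) 0 mu)).
  { assert (RInt (kD D T) 0 mu = RInt (fun t => Derive (fun u => k u T t) D) 0 mu).
    { apply RInt_ext. intros. symmetry. apply is_derive_unique. apply is_derive_Reals. apply d_kD; auto. }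
    rewrite H.
    apply (is_derive_RInt_param (fun u t => k u T t)).
    - eapply filter_imp. 2: apply (loc_pos D HD). intros d Hd t Ht. simpl.
      exists (kD d T t). apply is_derive_Reals. apply d_kD; auto.
    - intros t Ht. apply (continuity_2d_pt_ext_loc (fun u v => kD u T v)).
      + destruct (loc2_pos D t HD) as [del Hdel]. exists del. intros u v Hu Hv.
        symmetry. apply is_derive_unique. apply is_derive_Reals. apply d_kD; auto. eapply Hdel; eauto.
      + apply kD_cont2; auto.
    - eapply filter_imp. 2: apply (loc_pos D HD). intros d Hd. simpl. apply k_exRInt; auto. }
  apply is_derive_Reals. apply is_derive_Reals in HP.
  eapply Deq.
  { apply Dplus. apply Dmult. apply Dconst. apply Dminus.
    apply d_lcs'. auto. nra. apply d_lcs'. auto. nra.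
    apply Dmult. apply Dconst. exact HP. }
  fold Em Eu. unfold tt. field. lra.
Qed.

Definition hneg y := - / cosh y ^ 2.
Definition kT D s x := hneg (sqrt (x^2+D^2)/(2*s)) * / (2*s^2).

Lemma d_kT D s x : 0 < D -> 0 < s -> derivable_pt_lim (fun u => k D u x) s (kT D s x).
Proof.
  intros HD Hs. unfold k, tt, kT, hneg.
  assert (HE : 0 < sqrt (x^2+D^2)) by (apply sqrt_lt_R0; nra).
  set (E := sqrt (x^2+D^2)) in *. clearbody E.
  apply is_derive_Reals. unfold tanh, sinh, cosh. auto_derive.
  - pose proof (exp_pos (E * / (2*s))). pose proof (exp_pos (-(E * / (2*s)))). repeat split; lra.
  - rewrite !exp_Ropp. pose proof (exp_pos (E * / (2*s))). pose proof (Rinv_0_lt_compat _ H).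
    unfold Rdiv. set (u := exp (E * / (2*s))) in *.
    field. repeat split; nra.
Qed.

Lemma hneg_exd y : @ex_derive R_AbsRing R_NormedModule hneg y.
Proof.
  unfold hneg, cosh. auto_derive.
  pose proof (exp_pos y). pose proof (exp_pos (-y)). nra.
Qed.

Lemma hneg_neg y : hneg y < 0.
Proof. unfold hneg. pose proof (cosh_pos y). assert (0 < / cosh y ^ 2) by (apply Rinv_0_lt_compat; nra). lra. Qed.

Lemma kT_neg D s t : 0 < s -> kT D s t < 0.
Proof.
  intros Hs. unfold kT. pose proof (hneg_neg (sqrt (t^2+D^2)/(2*s))).
  assert (0 < / (2*s^2)) by (apply Rinv_0_lt_compat; nra). nra.
Qed.

Lemma kT_cont D s t : 0 < D -> 0 < s -> continuous (kT D s) t.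
Proof.
  intros HD Hs. apply cont_of. unfold kT, hneg, cosh. auto_derive.
  assert (0 < t*(t*1) + D*(D*1)) by nra.
  set (q := sqrt (t * (t * 1) + D * (D * 1)) * / (2 * s)).
  pose proof (exp_pos q). pose proof (exp_pos (- q)).
  repeat split; try lra; nra.
Qed.

Lemma kT_cont2 D s t : 0 < D -> 0 < s -> continuity_2d_pt (fun u v => kT D u v) s t.
Proof.
  intros HD Hs. unfold kT.
  assert (Hc : 0 < t^2 + D^2) by nra.
  apply (continuity_2d_pt_mult (fun u v => hneg (sqrt (v^2+D^2)/(2*u))) (fun u v => / (2*u^2))).
  - apply (continuity_1d_2d_pt_comp hneg (fun u v => sqrt (v^2+D^2)/(2*u))).
    apply cpt_of. apply hneg_exd.
    apply (continuity_2d_pt_mult (fun u v => sqrt (v^2+D^2)) (fun u v => / (2*u))).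
    + apply (continuity_1d_2d_pt_comp sqrt (fun u v => v^2+D^2)).
      apply continuity_pt_sqrt. lra.
      apply (continuity_2d_pt_plus (fun u v => v^2) (fun u v => D^2)).
      apply c2_sq_id2. apply continuity_2d_pt_const.
    + apply (continuity_2d_pt_inv (fun u v => 2*u)).
      apply (continuity_2d_pt_mult (fun u v => 2) (fun u v => u)).
      apply continuity_2d_pt_const. apply continuity_2d_pt_id1. lra.
  - apply (continuity_2d_pt_inv (fun u v => 2*u^2)).
    apply (continuity_2d_pt_mult (fun u v => 2) (fun u v => u^2)).
    apply continuity_2d_pt_const. apply c2_sq_id1. nra.
Qed.

Lemma d_lcT A s : 0 < s -> derivable_pt_lim (fun s => lc (A/(2*s))) s (tanh (A/(2*s)) * (- A / (2*s^2))).
Proof.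
  intros Hs.
  assert (Hg : derivable_pt_lim (fun s => A/(2*s)) s (- A / (2*s^2))).
  { apply is_derive_Reals. auto_derive. lra. field. lra. }
  pose proof (derivable_pt_lim_comp _ lc s _ _ Hg (d_lc _)). unfold comp in H. exact H.
Qed.

Lemma d_first3 A B s : 0 < s ->
  derivable_pt_lim (fun s => 2*s*(lc (A/(2*s)) - lc (B/(2*s)))) s (2*(phi (A/(2*s)) - phi (B/(2*s)))).
Proof.
  intros Hs. eapply Deq.
  { apply (Dmult (fun s => 2*s) _ s 2).
    apply is_derive_Reals. auto_derive. auto. ring.
    apply Dminus; apply d_lcT; auto. }
  unfold phi. field. lra.
Qed.

Lemma part3 xim mu D T : 0 < D -> 0 < T -> 0 < mu < xim ->
  exists l, derivable_pt_lim (fun t => fgap xim mu D t) T l /\ l < 0.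
Proof.
  intros HD HT Hmu.
  set (Em := sqrt (xim^2 + D^2)). set (Eu := sqrt (mu^2 + D^2)).
  assert (HEu : 0 < Eu) by (apply sqrt_lt_R0; nra).
  assert (HEm : Eu < Em) by (apply sqrt_lt_1_alt; nra).
  exists (2*(phi (Em/(2*T)) - phi (Eu/(2*T))) + mu * RInt (kT D T) 0 mu). split.
  2: { assert (phi (Em/(2*T)) < phi (Eu/(2*T))).
       { apply phi_dec. split. apply Rdiv_lt_0_compat; lra.
         unfold Rdiv. apply Rmult_lt_compat_r. apply Rinv_0_lt_compat; lra. lra. }
       assert (RInt (kT D T) 0 mu < 0).
       { apply RInt_neg. lra. intros; apply kT_neg; auto. intros; apply kT_cont; auto. }
       nra. }
  apply is_derive_Reals.
  apply (is_derive_ext_loc (fun s => 2*s*(lc (Em/(2*s)) - lc (Eu/(2*s)))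
       + mu * RInt (fun t => k D s t) 0 mu)).
  { eapply filter_imp. 2: apply (loc_pos T HT). intros s Hs. simpl.
    rewrite fgap_eq. f_equal. f_equal.
    replace (integrand D s) with (k D s) by (apply functional_extensionality; intros; rewrite integrand_k; auto).
    rewrite Rint_RInt; auto. apply k_exRInt; auto. }
  assert (HP : is_derive (fun s => RInt (fun t => k D s t) 0 mu) T (RInt (kT D T) 0 mu)).
  { assert (RInt (kT D T) 0 mu = RInt (fun t => Derive (fun u => k D u t) T) 0 mu).
    { apply RInt_ext. intros. symmetry. apply is_derive_unique. apply is_derive_Reals. apply d_kT; auto. }
    rewrite H.
    apply (is_derive_RInt_param (fun u t => k D u t)).
    - eapply filter_imp. 2: apply (loc_pos T HT). intros s Hs t Ht. simpl.
      exists (kT D s t). apply is_derive_Reals. apply d_kT; auto.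
    - intros t Ht. apply (continuity_2d_pt_ext_loc (fun u v => kT D u v)).
      + destruct (loc2_pos T t HT) as [del Hdel]. exists del. intros u v Hu Hv.
        symmetry. apply is_derive_unique. apply is_derive_Reals. apply d_kT; auto. eapply Hdel; eauto.
      + apply kT_cont2; auto.
    - eapply filter_imp. 2: apply (loc_pos T HT). intros s Hs. simpl. apply k_exRInt; auto. }
  apply is_derive_Reals. apply is_derive_Reals in HP.
  eapply Deq.
  { apply Dplus. apply d_first3. auto.
    apply Dmult. apply Dconst. exact HP. }
  simpl. ring.
Qed.

Theorem mainTheorem4 (xim : R) (hxim : 0 < xim) :
  (forall mu D T, 0 < D -> 0 < T -> 0 < mu < xim ->
     (exists l, derivable_pt_lim (fun m => fgap xim m D T) mu l /\ 0 < l) /\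
     (exists l, derivable_pt_lim (fun d => fgap xim mu d T) D l /\ l < 0) /\
     (exists l, derivable_pt_lim (fun t => fgap xim mu D t) T l /\ l < 0)) /\
  (forall mu D, 0 <= mu <= xim -> 0 <= D ->
     forall eps, 0 < eps -> exists M, forall T, M < T -> Rabs (fgap xim mu D T) < eps) /\
  (forall mu T, 0 <= mu <= xim -> 0 < T ->
     forall eps, 0 < eps -> exists M, forall D, M < D -> Rabs (fgap xim mu D T) < eps).
Proof.
  split; [|split].
  - intros mu D T HD HT Hmu. split; [|split].
    apply part1; auto. apply part2; auto. apply part3; auto.
  - intros. apply limT; auto.
  - intros. apply limD; auto.
Qed.
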